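(* Assume the Smoothness Assumption and the Extended KŁ Assumption (see context), and $r>\rho$. Let $\{x^k_\tau,y^k_\tau,z^k_\tau\}$ be generated by Algorithm 1 with $\beta\le\frac{L_y}{20r\varpi}$ if $\theta\in[0,\frac12]$, and for each $k,\tau$ let $y(z^k_{\tau+1})$ be any element of $\arg\max_{y\in\mathcal Y}d_r(y,z^k_{\tau+1})$. Then for any $k\ge0$ and $0\le\tau\le T-1$, $$20r\beta\big\|x_r(y(z^k_{\tau+1}),z^k_{\tau+1})-x_r(y^k_{\tau,+}(z^k_{\tau+1}),z^k_{\tau+1})\big\|^2\le L_y\|y^k_\tau-y^k_{\tau,+}(z^k_{\tau+1})\|^2+\chi_\theta C_\beta,$$ where $\chi_\theta=0$ for $\theta\in[0,\frac12]$ and $\chi_\theta=1$ for $\theta\in(\frac12,1]$ (with $\chi_\theta C_\beta:=0$ when $\theta\in[0,\frac12]$), $C_\beta=\frac{2\theta-1}{2\theta}\Big(\frac{20r\kappa}{(2\theta L_y)^{1/(2\theta)}}\Big)^{\frac{2\theta}{2\theta-1}}\beta^{\frac{2\theta}{2\theta-1}}$, and $\varpi=\frac{2(\ell D_{\mathcal Y})^{1-2\theta}}{r-\rho}\cdot\frac{\frac2{\alpha_y^2}+2L_y^2\sigma_2^2+2L_y^2}{\mu^2}$, $\kappa=\frac2{r-\rho}\Big(\frac{\sqrt{\frac2{\alpha_y^2}+2L_y^2\sigma_2^2+2L_y^2}}{\mu}\Big)^{1/\theta}$, $\sigma_2=2+\frac{L_y}{r-\rho}$.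
   Context: Problem. Let $\mathcal X\subseteq\mathbb R^{d_x}$, $\mathcal Y\subseteq\mathbb R^{d_y}$ be nonempty closed convex sets, $\mathbb P$ a distribution on $\Xi$, $f:\mathbb R^{d_x}\times\mathbb R^{d_y}\times\Xi\to\mathbb R$, $F(x,y)=\mathbb E_{\xi\sim\mathbb P}[f(x,y;\xi)]$ (finite-sum or online setting). Smoothness Assumption: (i) $\mathcal Y$ compact with diameter $D_{\mathcal Y}$; (ii) $\mathbb E|f(x_1,y_1;\xi)-f(x_2,y_2;\xi)|\le\ell(\|x_1-x_2\|+\|y_1-y_2\|)$ on $\mathcal X\times\mathcal Y$; (iii) for all $x,x_i\in\mathcal X$, $y,y_i\in\mathcal Y$: $\mathbb E\|\nabla_xf(x_1,y;\xi)-\nabla_xf(x_2,y;\xi)\|^2\le L_x^2\|x_1-x_2\|^2$, $\mathbb E\|\nabla_xf(x,y_1;\xi)-\nabla_xf(x,y_2;\xi)\|^2\le L_y^2\|y_1-y_2\|^2$, $\mathbb E\|\nabla_yf(x_1,y_1;\xi)-\nabla_yf(x_2,y_2;\xi)\|^2\le L_y^2(\|x_1-x_2\|^2+\|y_1-y_2\|^2)$; (iv) $F(\cdot,y)+\frac\rho2\|\cdot\|^2$ convex on $\mathcal X$ for each $y$; (v) unbiased stochastic gradients with variances at most $\sigma_x^2,\sigma_y^2$; (vi) $\max_y\min_xF\ge\underline F$. Extended KŁ Assumption: $\exists\mu>0,\theta\in[0,1]$: $\mathrm{dist}(0,-\nabla_yF(x,y)+\mathcal N_{\mathcal Y}(y))\ge\mu(\max_{y'\in\mathcal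 Y}F(x,y')-F(x,y))^\theta$ for all $x\in\mathcal X,y\in\mathcal Y$. Notation: $F_r(x,y,z)=F(x,y)+\frac r2\|x-z\|^2$, $x_r(y,z)=\arg\min_{x\in\mathcal X}F_r$, $d_r(y,z)=\min_{x\in\mathcal X}F_r$, $y^k_{\tau,+}(z)=\mathrm{proj}_{\mathcal Y}(y^k_\tau+\alpha_y\nabla_yF(x_r(y^k_\tau,z),y^k_\tau))$. Algorithm 1: Input $(x^0_0,y^0_0,z^0_0)$, positive integers $K,T,M,B$, parameters $\alpha_x,\alpha_y,\beta,r>0$; SPIDER estimators $G^k_{x,\tau},G^k_{y,\tau}$ (minibatch of size $B$ at $\tau=0$, with $B=N$ in the finite-sum setting; for $\tau\ge1$, $G^k_{\cdot,\tau}=\frac1M\sum_{i=1}^M[\nabla_\cdot f(x^k_\tau,y^k_\tau;\xi^k_{\tau,i})-\nabla_\cdot f(x^k_{\tau-1},y^k_{\tau-1};\xi^k_{\tau,i})]+G^k_{\cdot,\tau-1}$); updates $x^k_{\tau+1}=\mathrm{proj}_{\mathcal X}(x^k_\tau-\alpha_x[G^k_{x,\tau}+r(x^k_\tau-z^k_\tau)])$, $y^k_{\tau+1}=\mathrm{proj}_{\mathcal Y}(y^k_\tau+\alpha_yG^k_{y,\tau})$, $z^k_{\tau+1}=z^k_\tau+\beta(x^k_{\tau+1}-z^k_\tau)$, $\tau=0,\dots,T-1$; $(x^{k+1}_0,y^{k+1}_0,z^{k+1}_0)=(x^k_T,y^k_T,z^k_T)$. *)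

(* Defs.v *)
From HB Require Import structures.
From mathcomp Require Import all_boot all_order all_algebra.
From mathcomp Require Import all_classical all_reals all_analysis.
Set Implicit Arguments. Unset Strict Implicit. Unset Printing Implicit Defensive.
Import Order.TTheory GRing.Theory Num.Theory.
Import numFieldNormedType.Exports.
Local Open Scope classical_set_scope.
Local Open Scope ring_scope.

Section Defs.
Variable R : realType.

Definition dotv n (u v : 'rV[R]_n) : R := \sum_(i < n) u ord0 i * v ord0 i.
Definition sqnorm n (u : 'rV[R]_n) : R := dotv u u.
Definition enorm n (u : 'rV[R]_n) : R := Num.sqrt (sqnorm u).

Definition is_grad n (phi : 'rV[R]_n -> R) (x g : 'rV[R]_n) : Prop :=
  differentiable phi x /\ forall h, 'd phi x h = dotv g h.

Definition convex_set n (C : set 'rV[R]_n) : Prop :=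
  forall a b t, C a -> C b -> 0 <= t <= 1 -> C (t *: a + (1 - t) *: b).

Definition convex_on n (C : set 'rV[R]_n) (g : 'rV[R]_n -> R) : Prop :=
  forall a b t, C a -> C b -> 0 <= t <= 1 ->
    g (t *: a + (1 - t) *: b) <= t * g a + (1 - t) * g b.

Definition diam n (C : set 'rV[R]_n) : R :=
  sup [set enorm (p.1 - p.2) | p in C `*` C].

Definition normal_cone n (C : set 'rV[R]_n) (y : 'rV[R]_n) : set 'rV[R]_n :=
  [set v | forall y', C y' -> dotv v (y' - y) <= 0].

Definition dist0 n (S : set 'rV[R]_n) : R := inf [set enorm s | s in S].

Definition is_proj n (C : set 'rV[R]_n) (v p : 'rV[R]_n) : Prop :=
  C p /\ forall q, C q -> enorm (v - p) <= enorm (v - q).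

(* power with the KL convention 0^theta = 0 (also for theta = 0) *)
Definition klpow (a th : R) : R := if a == 0 then 0 else a `^ th.

End Defs.

Definition Fexp (R : realType) (d : measure_display) (Xi : measurableType d)
  (P : probability Xi R) dx dy (f : 'rV[R]_dx -> 'rV[R]_dy -> Xi -> R)
  (x : 'rV[R]_dx) (y : 'rV[R]_dy) : R :=
  fine (\int[P]_xi (f x y xi)%:E)%E.

(* Main.v *)
Require Import Defs.
From HB Require Import structures.
From mathcomp Require Import all_boot all_order all_algebra.
From mathcomp Require Import all_classical all_reals all_analysis.
From mathcomp Require Import measurable_realfun ring lra.
Import Order.TTheory GRing.Theory Num.Theory.
Import numFieldNormedType.Exports.
Local Open Scope classical_set_scope.
Local Open Scope ring_scope.


Section Vec.
Context {R : realType}.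
Context {n : nat}.
Implicit Types u v w : 'rV[R]_n.

Lemma dotvC u v : dotv u v = dotv v u.
Proof. by rewrite /dotv; apply: eq_bigr => i _; rewrite mulrC. Qed.

Lemma dotvDl u v w : dotv (u + v) w = dotv u w + dotv v w.
Proof. by rewrite /dotv -big_split; apply: eq_bigr => i _; rewrite mxE mulrDl. Qed.

Lemma dotvZl k u v : dotv (k *: u) v = k * dotv u v.
Proof. by rewrite /dotv mulr_sumr; apply: eq_bigr => i _; rewrite mxE mulrA. Qed.

Lemma dotvNl u v : dotv (- u) v = - dotv u v.
Proof. by rewrite -scaleN1r dotvZl mulN1r. Qed.

Lemma dotvBl u v w : dotv (u - v) w = dotv u w - dotv v w.
Proof. by rewrite dotvDl dotvNl. Qed.

Lemma dotvDr u v w : dotv w (u + v) = dotv w u + dotv w v.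
Proof. by rewrite dotvC dotvDl !(dotvC w). Qed.

Lemma dotvZr k u v : dotv v (k *: u) = k * dotv v u.
Proof. by rewrite dotvC dotvZl dotvC. Qed.

Lemma dotvNr u v : dotv v (- u) = - dotv v u.
Proof. by rewrite dotvC dotvNl dotvC. Qed.

Lemma dotvBr u v w : dotv w (u - v) = dotv w u - dotv w v.
Proof. by rewrite dotvDr dotvNr. Qed.

Lemma sqnorm_ge0 u : 0 <= sqnorm u.
Proof. by rewrite /sqnorm /dotv; apply: sumr_ge0 => i _; rewrite -expr2 sqr_ge0. Qed.

Lemma sqnormD u v : sqnorm (u + v) = sqnorm u + 2 * dotv u v + sqnorm v.
Proof. rewrite /sqnorm dotvDl !dotvDr (dotvC v u); ring. Qed.

Lemma sqnormB u v : sqnorm (u - v) = sqnorm u - 2 * dotv u v + sqnorm v.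
Proof. rewrite /sqnorm dotvDl !dotvDr (dotvC (-v) u) !dotvNl !dotvNr; ring. Qed.

Lemma sqnormZ k u : sqnorm (k *: u) = k ^+ 2 * sqnorm u.
Proof. rewrite /sqnorm dotvZl dotvZr; ring. Qed.

Lemma sqnormN u : sqnorm (- u) = sqnorm u.
Proof. by rewrite /sqnorm dotvNl dotvNr opprK. Qed.

Lemma dotv_le u v : 2 * dotv u v <= sqnorm u + sqnorm v.
Proof. have := sqnorm_ge0 (u - v); rewrite sqnormB; lra. Qed.

Lemma sqnormD_le u v : sqnorm (u + v) <= 2 * sqnorm u + 2 * sqnorm v.
Proof. have := dotv_le u v; rewrite sqnormD; lra. Qed.

Lemma enorm_sq u : enorm u ^+ 2 = sqnorm u.
Proof. by rewrite /enorm sqr_sqrtr // sqnorm_ge0. Qed.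

Lemma enorm_ge0 u : 0 <= enorm u.
Proof. exact: sqrtr_ge0. Qed.

Lemma sqnorm_conv (t : R) (a b z : 'rV[R]_n) :
  sqnorm (t *: a + (1 - t) *: b - z) =
  t * sqnorm (a - z) + (1 - t) * sqnorm (b - z) - t * (1 - t) * sqnorm (a - b).
Proof.
have -> : t *: a + (1 - t) *: b - z = t *: (a - z) + (1 - t) *: (b - z).
  by apply/rowP => i; rewrite !mxE; ring.
have -> : a - b = (a - z) - (b - z) by apply/rowP => i; rewrite !mxE; ring.
move: (a - z) (b - z) => A B.
rewrite (sqnormB A B) sqnormD !sqnormZ !dotvZl !dotvZr; ring.
Qed.

Lemma sqnorm_seg (t : R) (p h z : 'rV[R]_n) :
  sqnorm (p + t *: h - z) = sqnorm (p - z) + 2 * t * dotv (p - z) h + t ^+ 2 * sqnorm h.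
Proof.
have -> : p + t *: h - z = (p - z) + t *: h by apply/rowP => i; rewrite !mxE; ring.
move: (p - z) => A; rewrite sqnormD sqnormZ dotvZr; ring.
Qed.

End Vec.


Section Dir.
Context {R : realType}.
Context {n : nat}.

Lemma dir_cvg (phi : 'rV[R]_n -> R) p g h : is_grad phi p g ->
  (fun t : R => t^-1 * (phi (p + t *: h) - phi p)) @ 0^'+ --> dotv g h.
Proof.
case=> dphi Hd.
have cv := @diff_derivable _ _ _ phi p h dphi.
have E := @deriveE _ _ _ phi p h dphi.
rewrite Hd in E.
have cv2 : (fun t : R => t^-1 *: ((phi \o shift p) (t *: h) - phi p)) @ 0^' --> dotv g h.
  by rewrite -E; exact: cv.
have -> : (fun t : R => t^-1 * (phi (p + t *: h) - phi p)) =
          (fun t : R => t^-1 *: ((phi \o shift p) (t *: h) - phi p)).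
  by apply/funext => t /=; rewrite [t *: h + p]addrC.
move=> A /cv2 /nbhs_ballP [_ /posnumP[e] xe_A].
by exists e%:num => //= y xe_y; rewrite lt_def => /andP [xney _]; apply: xe_A.
Qed.

Lemma dir_lb (phi : 'rV[R]_n -> R) p g h A C : is_grad phi p g ->
  (forall t, 0 < t <= 1 -> t * A - t ^+ 2 * C <= phi (p + t *: h) - phi p) ->
  A <= dotv g h.
Proof.
move=> /dir_cvg cv H.
have cv1 : (fun t : R => t^-1 * (phi (p + t *: h) - phi p) + t * C) @ 0^'+ --> dotv g h + 0 * C.
  apply: cvgD => //; apply: cvgMl; exact: cvg_at_right_filter cvg_id.
rewrite mul0r addr0 in cv1.
apply: (cvgr_to_ge cv1).
near=> t.
have t0 : 0 < t by near: t; exact: nbhs_right_gt.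
have t1 : t <= 1 by near: t; apply: nbhs_right_le; exact: ltr01.
have := H t; rewrite t0 t1 => /(_ isT) Ht.
rewrite -(ler_pM2l t0) mulrDr mulrA mulfV ?gt_eqF // mul1r.
rewrite expr2 in Ht; lra.
Unshelve. all: by end_near.
Qed.

Lemma dir_ub (phi : 'rV[R]_n -> R) p g h A C : is_grad phi p g ->
  (forall t, 0 < t <= 1 -> phi (p + t *: h) - phi p <= t * A + t ^+ 2 * C) ->
  dotv g h <= A.
Proof.
move=> /dir_cvg cv H.
have cv1 : (fun t : R => t^-1 * (phi (p + t *: h) - phi p) - t * C) @ 0^'+ --> dotv g h - 0 * C.
  apply: cvgB => //; apply: cvgMl; exact: cvg_at_right_filter cvg_id.
rewrite mul0r subr0 in cv1.
apply: (cvgr_to_le cv1).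
near=> t.
have t0 : 0 < t by near: t; exact: nbhs_right_gt.
have t1 : t <= 1 by near: t; apply: nbhs_right_le; exact: ltr01.
have := H t; rewrite t0 t1 => /(_ isT) Ht.
rewrite -(ler_pM2l t0) mulrBr mulrA mulfV ?gt_eqF // mul1r.
rewrite expr2 in Ht; lra.
Unshelve. all: by end_near.
Qed.

End Dir.


Lemma cvx_conv {R : realType} {n : nat} {X : set 'rV[R]_n} : convex_set X ->
  forall a b (t : R), X a -> X b -> 0 <= t <= 1 -> X (t *: a + (1 - t) *: b).
Proof.
move=> cX a b t Xa Xb t01.
have P : Itv.spec (@Itv.num_sem R) (Itv.Real `[0%Z, 1%Z]) t.
  by rewrite /= /Itv.num_sem /= in_itv /= num_real.
pose l : {i01 R} := Itv.mk P.
have := cX a b l; rewrite !inE => /(_ Xa Xb).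
by [].
Qed.

Section Cvx.
Context {R : realType}.
Context {n : nat}.

Lemma le_small (K E : R) : (forall t, 0 < t <= 1 -> K <= t * E) -> K <= 0.
Proof.
move=> H; rewrite leNgt; apply/negP => K0.
have E0 : 0 <= `|E| by [].
have KE : 0 < K + `|E| by lra.
set t := K / (K + `|E|).
have t0 : 0 < t by rewrite /t divr_gt0.
have t1 : t <= 1 by rewrite /t ler_pdivrMr // mul1r; lra.
have := H t; rewrite t0 t1 => /(_ isT) Ht.
have : t * E <= t * `|E| by rewrite ler_pM2l // ler_norm.
have : t * `|E| < K.
  rewrite /t mulrAC ltr_pdivrMr // mulrDr; have := mulr_gt0 K0 K0; lra.
lra.
Qed.

Lemma conv_seg (t : R) (p u : 'rV[R]_n) : p + t *: (u - p) = t *: u + (1 - t) *: p.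
Proof. by apply/rowP => i; rewrite !mxE; ring. Qed.

Variables (X : set 'rV[R]_n) (G : 'rV[R]_n -> R) (rho r : R) (z : 'rV[R]_n).
Hypothesis cX : convex_set X.
Hypothesis cG : convex_on X (fun w => G w + rho / 2 * sqnorm w).

Lemma sc_min xs u : rho < r -> X xs ->
  (forall w, X w -> G xs + r / 2 * sqnorm (xs - z) <= G w + r / 2 * sqnorm (w - z)) -> X u ->
  G xs + r / 2 * sqnorm (xs - z) + (r - rho) / 2 * sqnorm (u - xs)
    <= G u + r / 2 * sqnorm (u - z).
Proof.
move=> rr Xxs Hmin Xu.
pose K := G xs + r / 2 * sqnorm (xs - z) + (r - rho) / 2 * sqnorm (u - xs)
   - (G u + r / 2 * sqnorm (u - z)).
suff : K <= 0 by rewrite /K; lra.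
apply: (@le_small K ((r - rho) / 2 * sqnorm (u - xs))) => t /andP[t0 t1].
have t01 : 0 <= t <= 1 by rewrite t1 ltW.
have Xw := cvx_conv cX _ _ _ Xu Xxs t01.
have H1 := Hmin _ Xw.
have H2 := cG _ _ _ Xu Xxs t01.
have E1 := sqnorm_conv t u xs z.
have E2 := sqnorm_conv t u xs 0.
rewrite !subr0 in E2.
rewrite E1 in H1; rewrite E2 in H2.
have : t * K <= t * (t * ((r - rho) / 2 * sqnorm (u - xs))).
  rewrite /K; lra.
by rewrite (ler_pM2l t0).
Qed.

Lemma fo_min xs g u : X xs -> is_grad G xs g ->
  (forall w, X w -> G xs + r / 2 * sqnorm (xs - z) <= G w + r / 2 * sqnorm (w - z)) -> X u ->
  0 <= dotv g (u - xs) + r * dotv (xs - z) (u - xs).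
Proof.
move=> Xxs gr Hmin Xu.
suff : - (r * dotv (xs - z) (u - xs)) <= dotv g (u - xs) by lra.
apply: (@dir_lb _ _ G xs g (u - xs) _ (r / 2 * sqnorm (u - xs)) gr) => t /andP[t0 t1].
have t01 : 0 <= t <= 1 by rewrite t1 ltW.
have Xw := cvx_conv cX _ _ _ Xu Xxs t01.
rewrite -conv_seg in Xw.
have H1 := Hmin _ Xw.
rewrite sqnorm_seg in H1.
lra.
Qed.

Lemma gi_conv p g u : X p -> is_grad G p g -> X u ->
  dotv g (u - p) <= G u - G p + rho / 2 * sqnorm (u - p).
Proof.
move=> Xp gr Xu.
have Eu : sqnorm u = sqnorm p + 2 * dotv p (u - p) + sqnorm (u - p).
  by rewrite -sqnormD; congr sqnorm; apply/rowP => i; rewrite !mxE; ring.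
apply: (@dir_ub _ _ G p g (u - p) _ (- (rho / 2 * sqnorm (u - p))) gr) => t /andP[t0 t1].
have t01 : 0 <= t <= 1 by rewrite t1 ltW.
have H2 := cG _ _ _ Xu Xp t01.
rewrite -conv_seg in H2.
have E := sqnorm_seg t p (u - p) 0; rewrite !subr0 in E.
rewrite E in H2.
nra.
Qed.

End Cvx.

Lemma lip_min (R : realType) n (X : set 'rV[R]_n) (G1 G2 : 'rV[R]_n -> R) rho r z x1 x2 g21 g22 :
  convex_set X -> convex_on X (fun w => G1 w + rho / 2 * sqnorm w) -> rho < r ->
  X x1 -> X x2 ->
  (forall w, X w -> G1 x1 + r / 2 * sqnorm (x1 - z) <= G1 w + r / 2 * sqnorm (w - z)) ->
  (forall w, X w -> G2 x2 + r / 2 * sqnorm (x2 - z) <= G2 w + r / 2 * sqnorm (w - z)) ->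
  is_grad G1 x2 g21 -> is_grad G2 x2 g22 ->
  (r - rho) ^+ 2 * sqnorm (x1 - x2) <= sqnorm (g22 - g21).
Proof.
move=> cX cG rr X1 X2 M1 M2 gr1 gr2.
have S := sc_min _ _ _ _ _ cX cG _ _ rr X1 M1 X2.
have GI := gi_conv _ _ _ cG _ _ _ X2 gr1 X1.
have FO := fo_min _ _ _ _ cX _ _ _ X2 gr2 M2 X1.
have E : sqnorm (x1 - z) = sqnorm (x2 - z) + 2 * dotv (x2 - z) (x1 - x2) + sqnorm (x1 - x2).
  by rewrite -sqnormD; congr sqnorm; apply/rowP => i; rewrite !mxE; ring.
have N : sqnorm (x2 - x1) = sqnorm (x1 - x2).
  by rewrite -sqnormN opprB.
rewrite E N in S.
have key : (r - rho) * sqnorm (x1 - x2) <= dotv (g22 - g21) (x1 - x2).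
  rewrite dotvBl; lra.
have := dotv_le ((r - rho) *: (x1 - x2)) (g22 - g21).
rewrite dotvZl sqnormZ (dotvC (x1 - x2)).
have c0 : 0 < r - rho by lra.
nra.
Qed.


Lemma jensen1 d (T : measurableType d) (R : realType) (P : probability T R) (h : T -> R) (m : R) :
  P.-integrable setT (EFin \o h) -> (\int[P]_s (h s)%:E = m%:E)%E ->
  ((m ^+ 2)%:E <= \int[P]_s (h s ^+ 2)%:E)%E.
Proof.
move=> hi hm.
have mh : measurable_fun setT h by apply/measurable_EFinP; exact: measurable_int hi.
have mh2 : measurable_fun setT (fun s => h s ^+ 2) by exact: measurable_funX.
have [fin|] := ltP (\int[P]_s (h s ^+ 2)%:E)%E +oo%E; last first.
  by rewrite leye_eq => /eqP ->; rewrite leey.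
have h2i : P.-integrable setT (EFin \o (fun s => h s ^+ 2)).
  apply/integrableP; split; first exact/measurable_EFinP.
  under eq_integral => s _ do rewrite /= ger0_norm ?sqr_ge0 //.
  exact: fin.
have ci : P.-integrable setT (EFin \o (fun s => 2 * m * h s)).
  apply: (eq_integrable measurableT _ _ _ (integrableZl measurableT (2 * m) hi)) => s _.
  by rewrite /= EFinM.
have ki : P.-integrable setT (EFin \o (cst (m ^+ 2))).
  exact: finite_measure_integrable_cst.
have key : (0 <= \int[P]_s ((h s ^+ 2)%:E - (2 * m * h s - m ^+ 2)%:E))%E.
  apply: integral_ge0 => s _; rewrite -EFinB lee_fin.
  have := sqr_ge0 (h s - m); rewrite sqrrB; lra.
have e2 : (\int[P]_s ((2 * m * h s - m ^+ 2)%:E) = (m ^+ 2)%:E)%E.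
  rewrite (eq_integral (fun s => (2 * m * h s)%:E - (cst (m ^+ 2) s)%:E))%E; last first.
    by move=> s _; rewrite EFinB.
  rewrite integralB_EFin //.
  rewrite (eq_integral (fun s => (2 * m)%:E * (h s)%:E))%E; last first.
    by move=> s _; rewrite EFinM.
  have ic : (\int[P]_s (cst (m ^+ 2) s)%:E = (m ^+ 2)%:E)%E.
    have := integral_cst P (@measurableT _ T) ((m ^+ 2)%:E); move=> ->; rewrite [X in (_ * X)%E](_ : _ = 1%E) ?mule1 //; exact: probability_setT.
  rewrite integralZl // hm ic -EFinM.
  rewrite -EFinB; congr EFin; ring.
have ie : (\int[P]_s ((h s ^+ 2)%:E - (2 * m * h s - m ^+ 2)%:E) =
          \int[P]_s ((h s ^+ 2)%:E) - \int[P]_s ((2 * m * h s - m ^+ 2)%:E))%E.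
  apply: integralB_EFin => //.
  apply: (eq_integrable measurableT _ _ _ (integrableB measurableT ci ki)) => s _.
  by rewrite /= EFinB.
rewrite ie e2 in key.
by rewrite -sube_ge0 // fin_numE; apply/andP; split.
Qed.

Lemma jensen_vec d (T : measurableType d) (R : realType) (P : probability T R) n
  (g1 g2 : T -> 'rV[R]_n) (G1 G2 : 'rV[R]_n) (K : R) :
  (forall i, P.-integrable setT (fun s => (g1 s ord0 i)%:E) /\
     (\int[P]_s (g1 s ord0 i)%:E = (G1 ord0 i)%:E)%E) ->
  (forall i, P.-integrable setT (fun s => (g2 s ord0 i)%:E) /\
     (\int[P]_s (g2 s ord0 i)%:E = (G2 ord0 i)%:E)%E) ->
  (\int[P]_s (sqnorm (g1 s - g2 s))%:E <= K%:E)%E ->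
  sqnorm (G1 - G2) <= K.
Proof.
move=> H1 H2 HK.
have J : forall i : 'I_n, (((G1 - G2) ord0 i ^+ 2)%:E <=
   \int[P]_s (((g1 s - g2 s) ord0 i) ^+ 2)%:E)%E.
  move=> i; have [i1 e1] := H1 i; have [i2 e2] := H2 i.
  apply: jensen1.
    apply: (eq_integrable measurableT _ _ _ (integrableB measurableT i1 i2)) => s _.
    by rewrite /= !mxE EFinB.
  rewrite (eq_integral (fun s => (g1 s ord0 i)%:E - (g2 s ord0 i)%:E))%E; last first.
    by move=> s _; rewrite !mxE EFinB.
  by rewrite integralB_EFin // e1 e2 !mxE EFinB.
rewrite -lee_fin; apply: le_trans HK.
rewrite /sqnorm /dotv -sumEFin.
have -> : (\int[P]_s ((\sum_(i < n) (g1 s - g2 s) ord0 i * (g1 s - g2 s) ord0 i)%:E) =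
     \sum_(i < n) \int[P]_s ((((g1 s - g2 s) ord0 i) ^+ 2)%:E))%E.
  rewrite -ge0_integral_sum //; last first.
    - by move=> i s _; rewrite lee_fin sqr_ge0.
    - move=> i; apply/measurable_EFinP; apply: measurable_funX.
      have [i1 _] := H1 i; have [i2 _] := H2 i.
      apply: (eq_measurable_fun (fun s => g1 s ord0 i - g2 s ord0 i)).
        by move=> s _; rewrite !mxE.
      apply: measurable_funB; apply/measurable_EFinP.
        exact: measurable_int i1.
      exact: measurable_int i2.
  apply: eq_integral => s _; rewrite sumEFin; congr EFin.
apply: lee_sum => i _; rewrite -expr2; exact: J.
Qed.

Lemma fine_int_lip d (T : measurableType d) (R : realType) (P : probability T R)
  (h1 h2 : T -> R) (L : R) :
  P.-integrable setT (fun s => (h1 s)%:E) -> P.-integrable setT (fun s => (h2 s)%:E) ->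
  (\int[P]_s (`|h1 s - h2 s|)%:E <= L%:E)%E ->
  fine (\int[P]_s (h1 s)%:E)%E - fine (\int[P]_s (h2 s)%:E)%E <= L.
Proof.
move=> i1 i2 HL.
have f1 := integrable_fin_num measurableT i1.
have f2 := integrable_fin_num measurableT i2.
have iB : P.-integrable setT (fun s => (h1 s - h2 s)%:E).
  apply: (eq_integrable measurableT _ _ _ (integrableB measurableT i1 i2)) => s _.
  by rewrite EFinB.
have mB : measurable_fun setT (fun s => (h1 s - h2 s)%:E) by exact: measurable_int iB.
have A := le_abse_integral P measurableT mB.
have E : (\int[P]_s (h1 s - h2 s)%:E = \int[P]_s (h1 s)%:E - \int[P]_s (h2 s)%:E)%E.
  rewrite (eq_integral (fun s => (h1 s)%:E - (h2 s)%:E))%E; last by move=> s _; rewrite EFinB.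
  exact: integralB_EFin.
rewrite E in A.
have B := le_trans A HL.
move: B; rewrite -(fineK f1) -(fineK f2) -EFinB /= lee_fin => B.
exact: le_trans (ler_norm _) B.
Qed.


Section Misc.
Context {R : realType} {n : nat}.

Lemma enorm_le_sq (u v : 'rV[R]_n) : enorm u <= enorm v -> sqnorm u <= sqnorm v.
Proof.
move=> H; rewrite -!enorm_sq.
have := ler_pM (enorm_ge0 u) (enorm_ge0 u) H H; by rewrite !expr2.
Qed.

Lemma proj_vi (Y : set 'rV[R]_n) v p q : convex_set Y -> is_proj Y v p -> Y q ->
  dotv (v - p) (q - p) <= 0.
Proof.
move=> cY [Yp Hmin] Yq.
apply: (@le_small _ _ (sqnorm (q - p) / 2)) => t /andP[t0 t1].
have t01 : 0 <= t <= 1 by rewrite t1 ltW.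
have Yw := cvx_conv cY _ _ _ Yq Yp t01.
have := enorm_le_sq _ _ (Hmin _ Yw).
have -> : v - (t *: q + (1 - t) *: p) = (v - p) - t *: (q - p).
  by apply/rowP => i; rewrite !mxE; ring.
rewrite (sqnormB (v - p)) sqnormZ dotvZr => H.
have : t * (2 * dotv (v - p) (q - p)) <= t * (t * sqnorm (q - p)) by lra.
rewrite ler_pM2l // => H2; lra.
Qed.

Lemma entry_le_norm (v : 'rV[R]_n) i : `|v ord0 i| <= `|v|.
Proof.
have -> : `|v| = mx_norm v by [].
rewrite mx_normrE.
exact: (le_bigmax _ (fun ij : 'I_1 * 'I_n => `|v ij.1 ij.2|) (ord0, i)).
Qed.

Lemma compact_sq_bound (Y : set 'rV[R]_n) : compact Y ->
  exists B, 0 <= B /\ forall v, Y v -> sqnorm v <= B.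
Proof.
move=> /compact_bounded [M0 [_ HM]].
have M1 : M0 < `|M0| + 1 by apply: le_lt_trans (ler_norm _) _; rewrite ltrDl.
have HB := HM _ M1.
exists (n%:R * (`|M0| + 1) ^+ 2); split; first by rewrite mulr_ge0 ?sqr_ge0.
move=> v Yv; have nv := HB v Yv.
rewrite /sqnorm /dotv.
apply: (@le_trans _ _ (\sum_(i < n) (`|M0| + 1) ^+ 2)).
  apply: ler_sum => i _.
  have e := le_trans (entry_le_norm v i) nv.
  rewrite -expr2 -(real_normK (num_real (v ord0 i))) !expr2.
  by apply: ler_pM => //; rewrite normr_ge0.
by rewrite sumr_const card_ord mulr_natl.
Qed.

End Misc.

Theorem lemmaA13
  (R : realType) (d : measure_display) (Xi : measurableType d)
  (P : probability Xi R) (dx dy : nat)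
  (X : set 'rV[R]_dx) (Y : set 'rV[R]_dy)
  (f : 'rV[R]_dx -> 'rV[R]_dy -> Xi -> R)
  (gfx : 'rV[R]_dx -> 'rV[R]_dy -> Xi -> 'rV[R]_dx)
  (gfy : 'rV[R]_dx -> 'rV[R]_dy -> Xi -> 'rV[R]_dy)
  (gFx : 'rV[R]_dx -> 'rV[R]_dy -> 'rV[R]_dx)
  (gFy : 'rV[R]_dx -> 'rV[R]_dy -> 'rV[R]_dy)
  (ell Lx Ly rho sigx sigy Flow mu theta : R)
  (T M B : nat) (ax ay beta r : R)
  (projX : 'rV[R]_dx -> 'rV[R]_dx) (projY : 'rV[R]_dy -> 'rV[R]_dy)
  (xr : 'rV[R]_dy -> 'rV[R]_dx -> 'rV[R]_dx)
  (ystar : nat -> nat -> 'rV[R]_dy)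
  (x z : nat -> nat -> 'rV[R]_dx) (y : nat -> nat -> 'rV[R]_dy)
  (Gx : nat -> nat -> 'rV[R]_dx) (Gy : nat -> nat -> 'rV[R]_dy)
  (xi : nat -> nat -> nat -> Xi) :
  let F := Fexp P f in
  let Fr := fun x' y' z' => F x' y' + r / 2 * sqnorm (x' - z') in
  let dr := fun y' z' => Fr (xr y' z') y' z' in
  let sigma2 := 2 + Ly / (r - rho) in
  let cst := 2 / ay ^+ 2 + 2 * Ly ^+ 2 * sigma2 ^+ 2 + 2 * Ly ^+ 2 in
  let varpi := 2 * (ell * diam Y) `^ (1 - 2 * theta) / (r - rho)
                 * (cst / mu ^+ 2) in
  let kappa := 2 / (r - rho) * (Num.sqrt cst / mu) `^ (theta^-1) in
  let Cbeta := (2 * theta - 1) / (2 * theta)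
       * (20 * r * kappa / (2 * theta * Ly) `^ ((2 * theta)^-1))
           `^ (2 * theta / (2 * theta - 1))
       * beta `^ (2 * theta / (2 * theta - 1)) in
  (* X, Y nonempty closed convex; Y compact *)
  X !=set0 -> closed X -> convex_set X ->
  Y !=set0 -> closed Y -> convex_set Y -> compact Y ->
  (* F is the expectation of f (f(x,y;.) integrable) *)
  (forall x' y', X x' -> Y y' -> P.-integrable setT (fun s => (f x' y' s)%:E)) ->
  (* (ii) *)
  (forall x1 x2 y1 y2, X x1 -> X x2 -> Y y1 -> Y y2 ->
     (\int[P]_s (`|f x1 y1 s - f x2 y2 s|)%:E
        <= (ell * (enorm (x1 - x2) + enorm (y1 - y2)))%:E)%E) ->
  (* stochastic partial gradients of f *)
  (forall x' y' s, X x' -> Y y' ->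
     is_grad (fun u => f u y' s) x' (gfx x' y' s) /\
     is_grad (fun v => f x' v s) y' (gfy x' y' s)) ->
  (* (iii) *)
  (forall x1 x2 y', X x1 -> X x2 -> Y y' ->
     (\int[P]_s (sqnorm (gfx x1 y' s - gfx x2 y' s))%:E
        <= (Lx ^+ 2 * sqnorm (x1 - x2))%:E)%E) ->
  (forall x' y1 y2, X x' -> Y y1 -> Y y2 ->
     (\int[P]_s (sqnorm (gfx x' y1 s - gfx x' y2 s))%:E
        <= (Ly ^+ 2 * sqnorm (y1 - y2))%:E)%E) ->
  (forall x1 x2 y1 y2, X x1 -> X x2 -> Y y1 -> Y y2 ->
     (\int[P]_s (sqnorm (gfy x1 y1 s - gfy x2 y2 s))%:E
        <= (Ly ^+ 2 * (sqnorm (x1 - x2) + sqnorm (y1 - y2)))%:E)%E) ->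
  (* (iv) *)
  (forall y', Y y' -> convex_on X (fun u => F u y' + rho / 2 * sqnorm u)) ->
  (* partial gradients of F *)
  (forall x' y', X x' -> Y y' ->
     is_grad (fun u => F u y') x' (gFx x' y') /\
     is_grad (fun v => F x' v) y' (gFy x' y')) ->
  (* (v) unbiasedness and bounded variance *)
  (forall x' y', X x' -> Y y' ->
     (forall i, P.-integrable setT (fun s => (gfx x' y' s ord0 i)%:E) /\
        (\int[P]_s (gfx x' y' s ord0 i)%:E = (gFx x' y' ord0 i)%:E)%E) /\
     (forall j, P.-integrable setT (fun s => (gfy x' y' s ord0 j)%:E) /\
        (\int[P]_s (gfy x' y' s ord0 j)%:E = (gFy x' y' ord0 j)%:E)%E) /\
     (\int[P]_s (sqnorm (gfx x' y' s - gFx x' y'))%:E <= (sigx ^+ 2)%:E)%E /\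
     (\int[P]_s (sqnorm (gfy x' y' s - gFy x' y'))%:E <= (sigy ^+ 2)%:E)%E) ->
  (* (vi) *)
  (Flow%:E <= ereal_sup [set ereal_inf [set (F u v)%:E | u in X] | v in Y])%E ->
  (* Extended KL assumption *)
  0 < mu -> 0 <= theta <= 1 ->
  (forall x' y', X x' -> Y y' ->
     mu * klpow (sup [set F x' v | v in Y] - F x' y') theta
       <= dist0 [set - gFy x' y' + w | w in normal_cone Y y']) ->
  (* parameters *)
  0 < Ly -> rho < r ->
  (0 < T)%N -> (0 < M)%N -> (0 < B)%N ->
  0 < ax -> 0 < ay -> 0 < beta -> 0 < r ->
  (theta <= 1 / 2 -> 20 * r * varpi * beta <= Ly) ->
  (* Euclidean projections *)
  (forall v, is_proj X v (projX v)) ->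
  (forall v, is_proj Y v (projY v)) ->
  (* x_r(y,z) = argmin_{x in X} F_r(x,y,z) *)
  (forall y' z', Y y' ->
     X (xr y' z') /\ forall u, X u -> Fr (xr y' z') y' z' <= Fr u y' z') ->
  (* y(z^k_{tau+1}) in argmax_{y in Y} d_r(y, z^k_{tau+1}) *)
  (forall k tau, Y (ystar k tau) /\
     forall v, Y v -> dr v (z k tau.+1) <= dr (ystar k tau) (z k tau.+1)) ->
  (* Algorithm 1 *)
  X (x 0%N 0%N) -> Y (y 0%N 0%N) ->
  (forall k,
     Gx k 0%N = (B%:R)^-1 *: \sum_(i < B) gfx (x k 0%N) (y k 0%N) (xi k 0%N i) /\
     Gy k 0%N = (B%:R)^-1 *: \sum_(i < B) gfy (x k 0%N) (y k 0%N) (xi k 0%N i)) ->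
  (forall k tau, (tau.+1 < T)%N ->
     Gx k tau.+1 = (M%:R)^-1 *: \sum_(i < M)
         (gfx (x k tau.+1) (y k tau.+1) (xi k tau.+1 i)
          - gfx (x k tau) (y k tau) (xi k tau.+1 i)) + Gx k tau /\
     Gy k tau.+1 = (M%:R)^-1 *: \sum_(i < M)
         (gfy (x k tau.+1) (y k tau.+1) (xi k tau.+1 i)
          - gfy (x k tau) (y k tau) (xi k tau.+1 i)) + Gy k tau) ->
  (forall k tau, (tau < T)%N ->
     x k tau.+1 = projX (x k tau - ax *: (Gx k tau + r *: (x k tau - z k tau))) /\
     y k tau.+1 = projY (y k tau + ay *: Gy k tau) /\
     z k tau.+1 = z k tau + beta *: (x k tau.+1 - z k tau)) ->
  (forall k, x k.+1 0%N = x k T /\ y k.+1 0%N = y k T /\ z k.+1 0%N = z k T) ->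
  forall k tau, (tau < T)%N ->
    let zz := z k tau.+1 in
    let yp := projY (y k tau + ay *: gFy (xr (y k tau) zz) (y k tau)) in
    20 * r * beta * sqnorm (xr (ystar k tau) zz - xr yp zz)
      <= Ly * sqnorm (y k tau - yp) + (if theta <= 1 / 2 then 0 else Cbeta).

Proof.
move=> F Fr dr sigma2 cst varpi kappa Cbeta
  Xne Xcl cX Yne Ycl cY Ycomp fint Hii fgrad Hx1 Hx2 Hy3 Hconv Fgrad Hv Hvi
  mu0 th01 KL Ly0 rr T0 M0 B0 ax0 ay0 beta0 r0 Hvarpi projXP projYP xrP ystarP
  X00 Y00 G0 Gstep Alg Restart k tau tauT.
cbv zeta.
set zz := z k tau.+1.
set yp := projY (y k tau + ay *: gFy (xr (y k tau) zz) (y k tau)).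
have Yinv : forall k tau, (tau <= T)%N -> Y (y k tau).
  elim=> [|k' IH] [|t] Ht.
  - exact: Y00.
  - have [_ [-> _]] := Alg 0%N t Ht; exact: (projYP _).1.
  - have [_ [-> _]] := Restart k'; exact: IH.
  - have [_ [-> _]] := Alg k'.+1 t Ht; exact: (projYP _).1.
pose c := r - rho.
have c0 : 0 < c by rewrite /c subr_gt0.
set y0 := y k tau.
set ys := ystar k tau.
have Yy0 : Y y0 by apply: Yinv; exact: ltnW.
have Yyp : Y yp by exact: (projYP _).1.
have Yys : Y ys by exact: (ystarP k tau).1.
have SC : forall y' u, Y y' -> X u ->
    Fr (xr y' zz) y' zz + c / 2 * sqnorm (u - xr y' zz) <= Fr u y' zz.
  move=> y' u Yy Xu; have [Xx Hm] := xrP y' zz Yy.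
  exact: (sc_min X (fun u => F u y') rho r zz cX (Hconv y' Yy) _ _ rr Xx Hm Xu).
have Lip : forall y1 y2, Y y1 -> Y y2 ->
    c ^+ 2 * sqnorm (xr y1 zz - xr y2 zz) <= Ly ^+ 2 * sqnorm (y2 - y1).
  move=> y1 y2 Y1 Y2.
  have [X1 M1] := xrP y1 zz Y1; have [X2 M2] := xrP y2 zz Y2.
  have L := lip_min _ _ X (fun u => F u y1) (fun u => F u y2) rho r zz _ _ _ _ cX (Hconv y1 Y1) rr X1 X2 M1 M2
     (Fgrad _ _ X2 Y1).1 (Fgrad _ _ X2 Y2).1.
  apply: le_trans L _.
  apply: (@jensen_vec _ _ _ P _ (gfx (xr y2 zz) y2) (gfx (xr y2 zz) y1)).
  - exact: (Hv _ _ X2 Y2).1.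
  - exact: (Hv _ _ X2 Y1).1.
  - exact: Hx2.
have GyL : forall x1 x2 y1 y2, X x1 -> X x2 -> Y y1 -> Y y2 ->
    sqnorm (gFy x1 y1 - gFy x2 y2) <= Ly ^+ 2 * (sqnorm (x1 - x2) + sqnorm (y1 - y2)).
  move=> x1 x2 y1 y2 X1 X2 Y1 Y2.
  apply: (@jensen_vec _ _ _ P _ (gfy x1 y1) (gfy x2 y2)).
  - exact: (Hv _ _ X1 Y1).2.1.
  - exact: (Hv _ _ X2 Y2).2.1.
  - exact: Hy3.
set x0 := xr y0 zz.
set xp := xr yp zz.
set xs := xr ys zz.
have Xx0 : X x0 by exact: (xrP _ _ Yy0).1.
have Xxp : X xp by exact: (xrP _ _ Yyp).1.
have Xxs : X xs by exact: (xrP _ _ Yys).1.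
set g := gFy x0 y0.
set Dy := sqnorm (y0 - yp).
have Dy0 : 0 <= Dy by apply: sqnorm_ge0.
have sqC : forall nn (a b : 'rV[R]_nn), sqnorm (a - b) = sqnorm (b - a).
  by move=> nn a b; rewrite -sqnormN opprB.
set w := ay^-1 *: (y0 + ay *: g - yp).
have Nw : normal_cone Y yp w.
  move=> q Yq; rewrite /w dotvZl.
  apply: mulr_ge0_le0; first by rewrite invr_ge0 ltW.
  exact: proj_vi cY (projYP _) Yq.
set e := - gFy xp yp + w.
have de : dist0 [set - gFy xp yp + w' | w' in normal_cone Y yp] <= enorm e.
  apply: ge_inf.
    by exists 0 => _ [s _ <-]; exact: enorm_ge0.
  by exists e => //; exists w.
have ee : e = ay^-1 *: (y0 - yp) + (g - gFy xp yp).
  apply/rowP => i; rewrite /e /w !mxE.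
  have ay1 : ay != 0 by rewrite gt_eqF.
  by field.
have HLx : c ^+ 2 * sqnorm (x0 - xp) <= Ly ^+ 2 * Dy.
  by rewrite /Dy sqC; exact: Lip.
have sig0 : Ly / c <= sigma2.
  have : 0 <= Ly / c by rewrite divr_ge0 // ltW.
  rewrite /sigma2 -/c; lra.
have HLx2 : sqnorm (x0 - xp) <= sigma2 ^+ 2 * Dy.
  have LD : 0 <= Ly / c by rewrite divr_ge0 // ltW.
  apply: (@le_trans _ _ ((Ly / c) ^+ 2 * Dy)); last first.
    by apply: ler_wpM2r => //; rewrite ler_pXn2r // ?nnegrE // (le_trans LD sig0).
  rewrite expr_div_n mulrAC ler_pdivlMr ?exprn_gt0 //.
  by rewrite mulrC.
have eb : sqnorm e <= cst * Dy.
  rewrite ee; apply: le_trans (sqnormD_le _ _) _.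
  rewrite sqnormZ.
  have := GyL _ _ _ _ Xx0 Xxp Yy0 Yyp; rewrite -/g => Hg.
  rewrite /cst.
  have : 2 * sqnorm (g - gFy xp yp) <= 2 * Ly ^+ 2 * sigma2 ^+ 2 * Dy + 2 * Ly ^+ 2 * Dy.
    have : Ly ^+ 2 * sqnorm (x0 - xp) <= Ly ^+ 2 * (sigma2 ^+ 2 * Dy).
      by apply: ler_wpM2l => //; rewrite sqr_ge0.
    rewrite -/Dy in Hg; lra.
  have -> : ay^-1 ^+ 2 = 1 / ay ^+ 2 by rewrite exprVn div1r.
  rewrite -/Dy; lra.
have enorm0 : enorm (0 : 'rV[R]_dx) = 0.
  rewrite /enorm /sqnorm /dotv big1 ?sqrtr0 // => i _; by rewrite mxE mul0r.
have enC : forall (a b : 'rV[R]_dy), enorm (a - b) = enorm (b - a).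
  by move=> a b; rewrite /enorm -/(sqnorm _) -/(sqnorm _) sqC.
have Flip : forall x' v v', X x' -> Y v -> Y v' -> F x' v - F x' v' <= ell * enorm (v - v').
  move=> x' v v' Xx' Yv Yv'.
  have := @fine_int_lip _ _ _ P _ _ _ (fint _ _ Xx' Yv) (fint _ _ Xx' Yv') (Hii _ _ _ _ Xx' Xx' Yv Yv').
  by rewrite subrr enorm0 add0r.
have [Bd [Bd0 HBd]] := compact_sq_bound _ Ycomp.
have enB : forall v v', Y v -> Y v' -> enorm (v - v') <= 1 + 4 * Bd.
  move=> v v' Yv Yv'.
  have h1 : sqnorm (v - v') <= 4 * Bd.
    apply: le_trans (sqnormD_le _ _) _; rewrite sqnormN.
    have := HBd _ Yv; have := HBd _ Yv'; lra.
  rewrite -enorm_sq in h1.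
  have := enorm_ge0 (v - v'); set q := enorm (v - v') in h1 *.
  move=> q0; rewrite expr2 in h1; nra.
pose SF := [set F xp v | v in Y].
have ubF : has_ubound SF.
  exists (F xp yp + `|ell| * (1 + 4 * Bd)) => _ [v Yv <-].
  have := Flip _ _ _ Xxp Yv Yyp.
  have := enB _ _ Yv Yyp; have := enorm_ge0 (v - yp).
  have := ler_norm ell; have := normr_ge0 ell.
  set q := enorm (v - yp); nra.
have supF : forall v, Y v -> F xp v <= sup SF.
  by move=> v Yv; apply: ub_le_sup => //; exists v.
set a := sup SF - F xp yp.
have a0 : 0 <= a by rewrite /a subr_ge0; exact: supF.
have HS : c / 2 * sqnorm (xs - xp) <= a.
  have S1 := SC ys xp Yys Xxp.
  have S2 := (ystarP k tau).2 yp Yyp.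
  rewrite -/zz -/xs -/xp in S1 S2.
  have S3 := supF _ Yys.
  rewrite /dr /Fr -/xs -/xp in S1 S2 *.
  rewrite /Fr in S1.
  rewrite sqC /a; lra.
set S := sqnorm (xs - xp).
have S0 : 0 <= S by apply: sqnorm_ge0.
have KLa := KL _ _ Xxp Yyp.
rewrite -/SF -/a in KLa.
have KLe := le_trans KLa de.
clear fint Hii fgrad Hx1 Hx2 Hy3 Hconv Fgrad Hv Hvi KL G0 Gstep Alg Restart projXP xrP ystarP Lip GyL SC Yinv HLx HLx2 sig0 de Nw X00 Y00 T0 M0 B0 ax0 Xne Xcl Yne Ycl KLa.
have sq_e : enorm e ^+ 2 <= cst * Dy by rewrite enorm_sq.
have HSa : S <= 2 / c * a.
  rewrite mulrC -ler_pdivrMr ?divr_gt0 //; rewrite invf_div; move: HS; rewrite /S mulrC.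
  by rewrite mulrC.
have c2 : 0 <= 2 / c by apply: divr_ge0 => //; exact: ltW.
have rb0 : 0 <= 20 * r * beta by rewrite !mulr_ge0 // ltW.
have [th0 th1'] : 0 <= theta /\ theta <= 1 by case/andP: th01.
have [a00|apos] := eqVneq a 0.
  have S00 : S <= 0 by rewrite a00 mulr0 in HSa.
  have Cb0 : 0 <= (if theta <= 1 / 2 then 0 else Cbeta).
    case: ifPn => // th; rewrite -ltNge in th.
    rewrite /Cbeta; apply: mulr_ge0; last exact: powR_ge0.
    apply: mulr_ge0; last exact: powR_ge0.
    apply: divr_ge0; lra.
  have : 20 * r * beta * S <= 0 by apply: mulr_ge0_le0.
  have := mulr_ge0 (ltW Ly0) Dy0.
  rewrite -/Dy; lra.
have a_pos : 0 < a by rewrite lt_neqAle eq_sym apos a0.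
rewrite /klpow (negbTE apos) in KLe.
have mua0 : 0 <= mu * a `^ theta by rewrite mulr_ge0 ?powR_ge0 // ltW.
have sq1 : (mu * a `^ theta) ^+ 2 <= cst * Dy.
  apply: le_trans sq_e; rewrite !expr2; exact: ler_pM.
rewrite -/Dy.
case: ifPn => th.
- pose SD := [set enorm (p.1 - p.2) | p in Y `*` Y].
  have ubD : has_ubound SD.
    by exists (1 + 4 * Bd) => _ [p [Y1 Y2] <-]; exact: enB.
  have Dge : forall v v', Y v -> Y v' -> enorm (v - v') <= diam Y.
    by move=> v v' Yv Yv'; apply: ub_le_sup => //; exists (v, v').
  have aD : a <= ell * diam Y.
    suff : sup SF <= F xp yp + ell * diam Y by rewrite /a; lra.
    apply: ge_sup; first by exists (F xp yp), yp.
    move=> _ [v Yv <-].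
    have h := Flip _ _ _ Xxp Yv Yyp.
    have [ell0|ellneg] := leP 0 ell.
      have := ler_wpM2l ell0 (Dge _ _ Yv Yyp); lra.
    have D0 : diam Y <= 0.
      rewrite /diam; apply: ge_sup; first by exists (enorm (yp - yp)), (yp, yp).
      move=> _ [[p1 p2] [/= Y1 Y2] <-] /=.
      have h1 := Flip _ _ _ Xxp Y1 Y2; have h2 := Flip _ _ _ Xxp Y2 Y1.
      rewrite enC in h2; have := enorm_ge0 (p2 - p1); nra.
    have := enorm_ge0 (v - yp); nra.
  have e12 : 0 <= 1 - 2 * theta by move: th; lra.
  have aa : a `^ (2 * theta) <= cst * Dy / mu ^+ 2.
    rewrite ler_pdivlMr ?exprn_gt0 //.
    have -> : a `^ (2 * theta) = (a `^ theta) ^+ 2.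
      by rewrite mulrC powRrM powR_mulrn ?powR_ge0.
    by rewrite mulrC -exprMn.
  have asplit : a = a `^ (1 - 2 * theta) * a `^ (2 * theta).
    rewrite -powRD; last by apply/implyP => _.
    by rewrite subrK powRr1.
  have lD0 : 0 <= ell * diam Y by lra.
  have apow : a `^ (1 - 2 * theta) <= (ell * diam Y) `^ (1 - 2 * theta).
    by apply: ge0_ler_powR => //; rewrite nnegrE.
  have abound : a <= (ell * diam Y) `^ (1 - 2 * theta) * (cst * Dy / mu ^+ 2).
    by rewrite {1}asplit; apply: ler_pM => //; exact: powR_ge0.
  have Svp : S <= varpi * Dy.
    apply: (le_trans HSa).
    have -> : varpi * Dy = 2 / c * ((ell * diam Y) `^ (1 - 2 * theta) * (cst * Dy / mu ^+ 2)).
      have c0' : 0 < r - rho := c0.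
      by rewrite /varpi /c; field; rewrite (gt_eqF mu0) (gt_eqF c0').
    by apply: ler_wpM2l.
  rewrite addr0.
  have H1 := Hvarpi th.
  apply: le_trans (ler_wpM2l rb0 Svp) _.
  rewrite mulrA; apply: ler_wpM2r => //.
  by rewrite mulrAC.
- have thp : 1 / 2 < theta by rewrite ltNge.
  have th0' : 0 < theta by lra.
  set s := Num.sqrt Dy.
  have s0 : 0 <= s := sqrtr_ge0 _.
  have sDy : s ^+ 2 = Dy by rewrite sqr_sqrtr.
  have cst0 : 0 <= cst.
    have t1 : 0 <= 2 / ay ^+ 2 by apply: divr_ge0; [|exact: sqr_ge0].
    have t2 : 0 <= 2 * Ly ^+ 2 * sigma2 ^+ 2 by apply: mulr_ge0; [apply: mulr_ge0|]; rewrite ?sqr_ge0.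
    have t3 : 0 <= 2 * Ly ^+ 2 by apply: mulr_ge0; rewrite ?sqr_ge0.
    rewrite /cst; lra.
  have en : enorm e <= Num.sqrt cst * s.
    rewrite /enorm /s -sqrtrM //; have -> := ler_sqrt (sqnorm e) (mulr_ge0 cst0 Dy0); exact: eb.
  have ath : a `^ theta <= Num.sqrt cst / mu * s.
    rewrite mulrAC ler_pdivlMr // mulrC; exact: (le_trans KLe en).
  have aeq : a = (a `^ theta) `^ (theta^-1).
    by rewrite -powRrM mulfV ?gt_eqF // powRr1 // ltW.
  have ti : 0 <= theta^-1 by rewrite invr_ge0 ltW.
  have sc0 : 0 <= Num.sqrt cst / mu by apply: divr_ge0; [exact: sqrtr_ge0| exact: ltW].
  have ab1 : a <= (Num.sqrt cst / mu * s) `^ (theta^-1).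
    rewrite {1}aeq; apply: (ge0_ler_powR ti) => //.
      by rewrite nnegrE powR_ge0.
    by rewrite nnegrE mulr_ge0.
  have ab : a <= (Num.sqrt cst / mu) `^ (theta^-1) * s `^ (theta^-1).
    by rewrite -powRM.
  have kap0 : 0 <= kappa by rewrite /kappa mulr_ge0 ?divr_ge0 ?powR_ge0 ?ltW.
  have Sk : S <= kappa * s `^ (theta^-1).
    apply: le_trans HSa _.
    rewrite /kappa -/c -[X in _ <= X]mulrA; apply: ler_wpM2l. exact: c2. exact: ab.
  set cc0 := (2 * theta * Ly) `^ ((2 * theta)^-1).
  have cc0p : 0 < cc0 by apply: powR_gt0; rewrite !mulr_gt0.
  set aY := cc0 * s `^ (theta^-1).
  set bY := 20 * r * beta * kappa / cc0.
  have aY0 : 0 <= aY by apply: mulr_ge0; [exact: ltW | exact: powR_ge0].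
  have bY0 : 0 <= bY by apply: divr_ge0; [exact: mulr_ge0 rb0 kap0 | exact: ltW].
  pose p := 2 * theta.
  pose q := 2 * theta / (2 * theta - 1).
  have p0 : 0 < p by rewrite /p mulr_gt0.
  have q0 : 0 < q by rewrite /q divr_gt0 //; lra.
  have pq : p^-1 + q^-1 = 1.
    rewrite /p /q invf_div; field.
    by rewrite !gt_eqF //; lra.
  have Yg := conjugate_powR aY0 bY0 p0 q0 pq.
  have eA : aY * bY = 20 * r * beta * (kappa * s `^ (theta^-1)).
    by rewrite /aY /bY; field; rewrite gt_eqF.
  have tl0 : 0 <= 2 * theta * Ly.
    by apply: mulr_ge0; [apply: mulr_ge0 => //; exact: ltW | exact: ltW].
  have eP : aY `^ p / p = Ly * Dy.
    rewrite /aY (powRM _ (ltW cc0p) (powR_ge0 _ _)) /cc0 -!powRrM.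
    have -> : (2 * theta)^-1 * p = 1 by rewrite /p mulVf // gt_eqF.
    have -> : theta^-1 * p = 2%:R by rewrite /p mulrCA mulVf ?gt_eqF // mulr1.
    rewrite (powRr1 tl0) (powR_mulrn _ s0) sDy /p.
    by field; rewrite gt_eqF.
  have k0 : 0 <= 20 * r * kappa / cc0.
    apply: divr_ge0; last exact: ltW.
    apply: mulr_ge0; last exact: kap0.
    by apply: mulr_ge0 => //; exact: ltW.
  have eQ : bY `^ q / q = Cbeta.
    have -> : bY = 20 * r * kappa / cc0 * beta by rewrite /bY; field; rewrite gt_eqF.
    rewrite (powRM _ k0 (ltW beta0)).
    rewrite /Cbeta /q -/cc0; field.
    by rewrite !gt_eqF //; lra.
  have h1 := ler_wpM2l rb0 Sk.
  rewrite -eA in h1.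
  apply: (le_trans h1).
  by rewrite -eP -eQ.
Qed.
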